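(* Let $\frac{1}{2}\leq \alpha <1$ and let $G$ be a graph with $n$ vertices and $m$ edges. If $1\leq k\leq n-1$, then $$S_{k}(A_{\alpha}(G))\leq \frac{2\alpha km}{n}+\sqrt{\frac{k(n-k)}{n}\left(\alpha^2Z_1+2m(1-\alpha)^2-\frac{4\alpha^2m^2}{n}\right)},$$ where $Z_1$ is the first Zagreb index of $G$.
   Context: All graphs are simple and undirected. $A_{\alpha}(G)=\alpha D(G)+(1-\alpha)A(G)$, where $A(G)$ is the adjacency matrix and $D(G)$ the diagonal matrix of vertex degrees. For a real symmetric matrix $M$ with eigenvalues $\lambda_1(M)\geq\cdots\geq\lambda_n(M)$, $S_k(M)=\sum_{i=1}^k\lambda_i(M)$. The first Zagreb index $Z_1=Z_1(G)=\sum_{v\in V(G)} d_v^2$ is the sum of the squares of the vertex degrees. *)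

(* Defs.v *)
From HB Require Import structures.
From mathcomp Require Import all_boot all_order all_algebra.
Set Implicit Arguments. Unset Strict Implicit. Unset Printing Implicit Defensive.
Import Order.TTheory GRing.Theory Num.Theory.
Local Open Scope ring_scope.

Definition simple_graph (n : nat) (e : rel 'I_n) : Prop :=
  symmetric e /\ irreflexive e.

Definition deg (n : nat) (e : rel 'I_n) (v : 'I_n) : nat := #|[set w | e v w]|.

Definition nedges (n : nat) (e : rel 'I_n) : nat :=
  #|[set p : 'I_n * 'I_n | (p.1 < p.2)%N && e p.1 p.2]|.

Definition zagreb1 (n : nat) (e : rel 'I_n) : nat := (\sum_(v < n) (deg e v) ^ 2)%N.

Definition adjmx (R : nzRingType) (n : nat) (e : rel 'I_n) : 'M[R]_n :=
  \matrix_(i, j) (if e i j then 1 else 0).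

Definition degmx (R : nzRingType) (n : nat) (e : rel 'I_n) : 'M[R]_n :=
  diag_mx (\row_i ((deg e i)%:R)).

Definition Aalpha (R : comNzRingType) (n : nat) (e : rel 'I_n) (alpha : R) : 'M[R]_n :=
  alpha *: degmx R e + (1 - alpha) *: adjmx R e.

Definition eigenvalues_desc (R : realDomainType) (n : nat) (M : 'M[R]_n) (s : seq R) : Prop :=
  sorted (fun x y => y <= x) s /\ char_poly M = \prod_(x <- s) ('X - x%:P).

Definition Sk (R : realDomainType) (s : seq R) (k : nat) : R := \sum_(i < k) s`_i.

(* Main.v *)
Require Import Defs.
From HB Require Import structures.
From mathcomp Require Import all_boot all_order all_algebra.
From mathcomp Require Import ring lra zify.
Import Order.TTheory GRing.Theory Num.Theory.
Local Open Scope ring_scope.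

Section CS.
Variable R : rcfType.

Lemma cs_sum (f : nat -> R) a b : (a <= b)%N ->
  (\sum_(a <= i < b) f i) ^+ 2 <= (b - a)%:R * \sum_(a <= i < b) f i ^+ 2.
Proof.
rewrite leq_eqVlt => /orP[/eqP->|ab]; first by rewrite big_geq // subnn expr0n mul0r.
set S := \sum_(a <= i < b) f i; set Q := \sum_(a <= i < b) f i ^+ 2.
set L : R := (b - a)%:R.
have Lp : 0 < L by rewrite ltr0n subn_gt0.
have H : 0 <= \sum_(a <= i < b) (L * f i - S) ^+ 2 by apply: sumr_ge0 => i _; exact: sqr_ge0.
have E : \sum_(a <= i < b) (L * f i - S) ^+ 2 = L ^+ 2 * Q - L * S ^+ 2.
  transitivity (\sum_(a <= i < b) (L ^+ 2 * f i ^+ 2 - (2 * L * S) * f i + S ^+ 2)).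
    by apply: eq_bigr => i _; ring.
  rewrite big_split /= sumrB -!mulr_sumr sumr_const_nat -/S -/Q -/L.
  rewrite -mulr_natr -/L; ring.
rewrite E in H.
have : 0 <= L * (L * Q - S ^+ 2) by rewrite mulrBr mulrA -expr2.
by rewrite pmulr_rge0 // subr_ge0.
Qed.

Lemma key (f : nat -> R) k N : (0 < k)%N -> (k < N)%N ->
  \sum_(0 <= i < k) f i <= k%:R / N%:R * (\sum_(0 <= i < N) f i)
     + Num.sqrt (k%:R * (N - k)%:R / N%:R * (\sum_(0 <= i < N) f i ^+ 2 - (\sum_(0 <= i < N) f i) ^+ 2 / N%:R)).
Proof.
move=> k0 kN.
set T := \sum_(0 <= i < N) f i; set Q := \sum_(0 <= i < N) f i ^+ 2.
have kN' : (k <= N)%N by apply: ltnW.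
set A := \sum_(0 <= i < k) f i; set B := \sum_(k <= i < N) f i.
set QA := \sum_(0 <= i < k) f i ^+ 2; set QB := \sum_(k <= i < N) f i ^+ 2.
have TE : T = A + B by rewrite /T (@big_cat_nat _ _ _ k 0 N _ _ (leq0n k) kN').
have QE : Q = QA + QB by rewrite /Q (@big_cat_nat _ _ _ k 0 N _ _ (leq0n k) kN').
have CA := @cs_sum f 0 k (leq0n k); rewrite subn0 -/A -/QA in CA.
have CB := @cs_sum f k N kN'; rewrite -/B -/QB in CB.
rewrite TE QE natrB //.
rewrite natrB // in CB.
set p : R := k%:R in CA *; set q : R := N%:R - p in CB *.
have pp : 0 < p by rewrite ltr0n.
have qp : 0 < q by rewrite subr_gt0 ltr_nat.
have Ne : N%:R = p + q by rewrite /q; ring.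
rewrite Ne.
have pq0 : p + q != 0 by rewrite gt_eqF // addr_gt0.
set a := A - p / (p + q) * (A + B).
rewrite -lerBlDl -/a.
have E : p * q / (p + q) * (QA + QB - (A + B) ^+ 2 / (p + q)) - a ^+ 2
   = (q * (p * QA - A ^+ 2) + p * (q * QB - B ^+ 2)) / (p + q).
  rewrite /a; field; exact: pq0.
have H : a ^+ 2 <= p * q / (p + q) * (QA + QB - (A + B) ^+ 2 / (p + q)).
  rewrite -subr_ge0 E; apply: divr_ge0; last by apply: ltW; apply: addr_gt0.
  apply: addr_ge0; apply: mulr_ge0.
  - exact: ltW.
  - by rewrite subr_ge0.
  - exact: ltW.
  - by rewrite subr_ge0.
apply: le_trans (ler_norm a) _.
rewrite -sqrtr_sqr ler_sqrt //; exact: le_trans (sqr_ge0 a) H.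
Qed.
End CS.
Lemma char_poly_horner (R : comNzRingType) n (A : 'M[R]_n) x :
  (char_poly A).[x] = \det (x%:M - A).
Proof.
rewrite -horner_evalE /char_poly -det_map_mx; congr (\det _).
apply/matrixP => i j; rewrite !mxE /=.
change (('X *+ (i == j) - (A i j)%:P).[x] = x *+ (i == j) - A i j).
by rewrite hornerD hornerN hornerMn hornerX hornerC.
Qed.

Lemma poly_eq_nat (R : numFieldType) (p q : {poly R}) :
  (forall i : nat, p.[i%:R] = q.[i%:R]) -> p = q.
Proof.
move=> H; apply/eqP; rewrite -subr_eq0; apply/negPn/negP => nz.
set r := p - q.
have := @max_poly_roots _ r [seq i%:R | i <- iota 0 (size r)] nz.
rewrite size_map size_iota ltnn => Hf; suff: false by []; apply: Hf.
  apply/allP => x /mapP [i _ ->]; by rewrite /root hornerD hornerN H subrr.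
rewrite map_inj_uniq ?iota_uniq //; exact: (@mulrIn R 1 (oner_neq0 R)).
Qed.

Section Tr.
Variable R : rcfType.

Lemma tr_sq n (M : 'M[R]_n) (s : seq R) :
  char_poly M = \prod_(x <- s) ('X - x%:P) ->
  char_poly (M *m M) = \prod_(x <- [seq y ^+ 2 | y <- s]) ('X - x%:P).
Proof.
move=> Hs; apply: poly_eq_nat => i.
set x := Num.sqrt (i%:R : R).
have xE : (i%:R : R) = x ^+ 2 by rewrite sqr_sqrtr ?ler0n.
rewrite xE char_poly_horner.
have -> : (x ^+ 2)%:M - M *m M = (x%:M - M) *m (x%:M + M).
  rewrite mulmxDr !mulmxBl !mul_scalar_mx mul_mx_scalar.
  rewrite expr2 scalar_mxM -mul_scalar_mx mul_scalar_mx.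
  by rewrite addrA subrK.
rewrite det_mulmx.
have -> : x%:M + M = - ((- x)%:M - M) by rewrite opprB raddfN /= opprK addrC.
rewrite -[- ((- x)%:M - M)]scaleN1r detZ -!char_poly_horner Hs !horner_prod big_map.
have Hsz : size s = n.
  have := size_char_poly M; rewrite Hs size_prod_XsubC; case.
  done.
rewrite -Hsz.
have E : forall (t : seq R) z, (\prod_(y <- t) ('X - y%:P)).[z] = \prod_(y <- t) (z - y).
  by move=> t z; rewrite horner_prod; apply: eq_bigr => y _; rewrite hornerXsubC.
under eq_bigr do rewrite hornerXsubC.
under [X in _ * (_ * X)]eq_bigr do rewrite hornerXsubC.
under [RHS]eq_bigr do rewrite hornerXsubC.
elim: (s) => [|y t IH]; first by rewrite !big_nil expr0 !mulr1.
rewrite !big_cons /= exprS -IH; ring.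
Qed.
End Tr.
Section G.
Variable R : rcfType.
Variable n : nat.
Variable e : rel 'I_n.
Hypothesis se : symmetric e.
Hypothesis ie : irreflexive e.

Lemma deg_sum i : ((deg e i)%:R : R) = \sum_j (e i j)%:R.
Proof.
rewrite /deg -sum1_card big_mkcond natr_sum; apply: eq_bigr => j _.
by rewrite inE; case: (e i j).
Qed.

Lemma handshake : \sum_(i : 'I_n) \sum_(j : 'I_n) ((e i j)%:R : R) = 2 * (nedges e)%:R.
Proof.
have H1 : ((nedges e)%:R : R) = \sum_(i : 'I_n) \sum_(j : 'I_n) (((i < j)%N && e i j)%:R).
  rewrite /nedges -sum1_card big_mkcond natr_sum pair_bigA /=.
  by apply: eq_bigr => p _; rewrite inE; case: (_ && _).
have H2 : \sum_(i : 'I_n) \sum_(j : 'I_n) ((e i j)%:R : R) =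
   \sum_(i : 'I_n) \sum_(j : 'I_n) (((i < j)%N && e i j)%:R) + \sum_(i : 'I_n) \sum_(j : 'I_n) (((j < i)%N && e i j)%:R).
  rewrite -big_split /=; apply: eq_bigr => i _; rewrite -big_split /=.
  apply: eq_bigr => j _.
  case: (ltngtP i j) => [ij|ji|/val_inj ->]; rewrite ?andbF ?andbT ?addr0 ?add0r //.
  by rewrite ie.
rewrite H2 H1 -[2]/(1 + 1) mulrDl mul1r; congr (_ + _).
rewrite exchange_big /=.
by apply: eq_bigr => i _; apply: eq_bigr => j _; rewrite se.
Qed.

Lemma sum_deg : \sum_i ((deg e i)%:R : R) = 2 * (nedges e)%:R.
Proof. by rewrite -handshake; apply: eq_bigr => i _; rewrite deg_sum. Qed.

Variable alpha : R.

Lemma Aentry i j : Aalpha e alpha i j =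
  (if j == i then alpha * (deg e i)%:R else 0) + (1 - alpha) * (e i j)%:R.
Proof.
rewrite /Aalpha /degmx /adjmx !mxE [j == i]eq_sym.
by case: (i == j); case: (e i j); rewrite /= ?mulr1n ?mulr0n ?mulr1 ?mulr0.
Qed.

Lemma trA : \tr (Aalpha e alpha) = alpha * (2 * (nedges e)%:R).
Proof.
rewrite /mxtrace -sum_deg mulr_sumr; apply: eq_bigr => i _.
by rewrite Aentry eqxx ie mulr0 addr0.
Qed.

Lemma trA2 : \tr (Aalpha e alpha *m Aalpha e alpha) =
  alpha ^+ 2 * (zagreb1 e)%:R + (1 - alpha) ^+ 2 * (2 * (nedges e)%:R).
Proof.
rewrite /mxtrace -sum_deg /zagreb1 natr_sum mulr_sumr mulr_sumr -big_split /=.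
apply: eq_bigr => i _; rewrite mxE.
transitivity (\sum_j ((if j == i then alpha ^+ 2 * (deg e i)%:R ^+ 2 else 0)
                 + (1 - alpha) ^+ 2 * (e i j)%:R)).
  apply: eq_bigr => j _; rewrite !Aentry (se j i) [i == j]eq_sym.
  case: eqP => [->|_]; first by rewrite ie /= mulr0 addr0; ring.
  by case: (e i j); rewrite /= ?add0r ?mulr1 ?mulr0 ?expr2 ?mul0r.
rewrite big_split /= -big_mkcond /= big_pred1_eq -mulr_sumr -deg_sum.
by rewrite natrX.
Qed.
End G.

Lemma eig_sums (R : rcfType) n (M : 'M[R]_n) (s : seq R) : (0 < n)%N ->
  char_poly M = \prod_(x <- s) ('X - x%:P) ->
  [/\ size s = n, \sum_(y <- s) y = \tr M & \sum_(y <- s) y ^+ 2 = \tr (M *m M)].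
Proof.
move=> n0 Hs.
have Hsz : size s = n.
  by have := size_char_poly M; rewrite Hs size_prod_XsubC; case.
have s0 : size s != 0%N by rewrite Hsz -lt0n.
split => //.
  apply: oppr_inj; rewrite -char_poly_trace // Hs -Hsz coefPn_prod_XsubC //.
have Hs2 := @tr_sq R n M s Hs.
have s20 : size [seq y ^+ 2 | y <- s] != 0%N by rewrite size_map.
apply: oppr_inj; rewrite -char_poly_trace // Hs2.
rewrite -Hsz -(size_map (fun y => y ^+ 2) s) coefPn_prod_XsubC // big_map //.
Qed.

Theorem theorem3p2 (R : rcfType) (n : nat) (e : rel 'I_n) (alpha : R) (k : nat)
  (s : seq R) :
  simple_graph e ->
  1 / 2 <= alpha -> alpha < 1 ->
  (1 <= k)%N -> (k <= n - 1)%N ->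
  eigenvalues_desc (Aalpha e alpha) s ->
  let m : R := (nedges e)%:R in
  let Z1 : R := (zagreb1 e)%:R in
  Sk s k <= 2 * alpha * k%:R * m / n%:R
            + Num.sqrt (k%:R * (n - k)%:R / n%:R
                        * (alpha ^+ 2 * Z1 + 2 * m * (1 - alpha) ^+ 2
                           - 4 * alpha ^+ 2 * m ^+ 2 / n%:R)).
Proof.
move=> [se ie] ha1 ha2 k1 kn [_ Hs]; cbv zeta.
have kn' : (k < n)%N by lia.
have n0 : (0 < n)%N by lia.
have [Hsz HT HQ] := @eig_sums R n _ s n0 Hs.
have hT : \sum_(0 <= i < n) s`_i = alpha * (2 * (nedges e)%:R).
  by rewrite -(@trA R n e se ie alpha) -HT [RHS](big_nth 0) Hsz.
have hQ : \sum_(0 <= i < n) s`_i ^+ 2 =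
    alpha ^+ 2 * (zagreb1 e)%:R + (1 - alpha) ^+ 2 * (2 * (nedges e)%:R).
  by rewrite -(@trA2 R n e se ie alpha) -HQ [RHS](big_nth 0) Hsz.
rewrite /Sk -(big_mkord xpredT (fun i => s`_i)).
have H := @key R (fun i => s`_i) k n k1 kn'.
rewrite hT hQ in H; apply: le_trans H _.
rewrite le_eqVlt; apply/orP; left; apply/eqP.
congr (_ + Num.sqrt (_ * _)); ring.
Qed.
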